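(* Assume (A1) and (A2). There is an absolute constant $c$ such that if $n\ge c\,\bar\kappa^2r^2\log k/\tau^2$, then with high probability $$\|Q^{-1/2}(\nabla f(x^* )-n\mathbf 1)\|_2\le\widetilde O(\sqrt{nr})\quad\text{and}\quad\|Q^{-1/2}(\nabla f(x^* )-n\mathbf 1)\|_\infty\le\widetilde O(\sqrt n).$$
   Context: $A\in\mathbb{R}^{D\times k}$ is a word-topic matrix (nonnegative entries, columns summing to $1$). $x^*\in\{z\in\mathbb{R}^k_{\ge0}:\sum z_i=1\}$; a document of $n$ words $w_1,\dots,w_n$ is drawn i.i.d. from the categorical distribution on $[D]$ with probabilities $Ax^*$. Assumption (A1): $R=\mathrm{supp}(x^* )$ has $|R|\le r$ and $x^*_i\ge\tau/r$ for all $i\in R$, where $\tau\in(0,1]$. Assumption (A2): for every $r$-sparse $v\in\mathbb{R}^k$, $\|Av\|_1\ge\|v\|_1/\bar\kappa$. Vectors supported on $R$ are identified with vectors in $\mathbb{R}^R$; $\mathbf 1\in\mathbb{R}^R$ is the all-ones vector. $\hat a_w\in\mathbb{R}^R$ is the $w$-th row of $A$ restricted to the columns in $R$. The restricted log-likelihood is $f(x)=\sum_{t=1}^n\log\langle\hat a_{w_t},x\rangle$, so $\nabla f(x^* )=\sum_{t=1}^n\hat a_{w_t}/\langle\hat a_{w_t},x^*\rangle$. The Fisher information matrix is $Q=\sum_{i\in[D]:\hat a_i\neq 0}\hat a_i\hat a_i^\top/\langle\hat a_i,x^*\rangle\in\mathbb{R}^{R\times R}$ (it is positive definite under (A2)).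 ''With high probability'' means with probability $1-o(1)$ as $k\to\infty$, and $\widetilde O(\cdot)$ hides constant and polylogarithmic-in-$k$ factors. *)

(* Defs.v *)
From Stdlib Require Import Reals Lra ClassicalDescription List.
Open Scope R_scope.

Fixpoint sumR (m : nat) (f : nat -> R) : R :=
  match m with O => 0 | S m' => sumR m' f + f m' end.

Definition indic (P : Prop) : R :=
  if excluded_middle_informative P then 1 else 0.

(* Indices 0..k-1 are topics, 0..D-1 are words.  A w i = entry (w,i) of A. *)
Definition supp (k : nat) (x : nat -> R) (i : nat) : Prop :=
  (i < k)%nat /\ x i <> 0.

Definition sumSupp (k : nat) (x : nat -> R) (f : nat -> R) : R :=
  sumR k (fun i => indic (supp k x i) * f i).

Definition ahat_dot (k : nat) (A : nat -> nat -> R) (x : nat -> R) (w : nat) : R :=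
  sumSupp k x (fun i => A w i * x i).

Definition ahat_nz (k : nat) (A : nat -> nat -> R) (x : nat -> R) (w : nat) : Prop :=
  exists i, supp k x i /\ A w i <> 0.

Definition fisher (D k : nat) (A : nat -> nat -> R) (x : nat -> R) (i j : nat) : R :=
  sumR D (fun w => indic (ahat_nz k A x w) * (A w i * A w j / ahat_dot k A x w)).

(* gradient of restricted log-likelihood at x for document ws, coordinate i in R *)
Definition grad (k : nat) (A : nat -> nat -> R) (x : nat -> R) (ws : list nat) (i : nat) : R :=
  fold_right (fun w acc => A w i / ahat_dot k A x w + acc) 0 ws.

Definition word_prob (k : nat) (A : nat -> nat -> R) (x : nat -> R) (w : nat) : R :=
  sumR k (fun i => A w i * x i).

(* expectation of f over n i.i.d. draws from p on {0..D-1} *)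
Fixpoint expect (p : nat -> R) (D n : nat) (f : list nat -> R) : R :=
  match n with
  | O => f nil
  | S n' => sumR D (fun w => p w * expect p D n' (fun l => f (w :: l)))
  end.

Definition prob (p : nat -> R) (D n : nat) (E : list nat -> Prop) : R :=
  expect p D n (fun l => indic (E l)).

Definition whitened (k : nat) (A : nat -> nat -> R) (x : nat -> R)
  (S : nat -> nat -> R) (n : nat) (ws : list nat) (i : nat) : R :=
  sumSupp k x (fun j => S i j * (grad k A x ws j - INR n)).

Definition norm2_supp (k : nat) (x : nat -> R) (y : nat -> R) : R :=
  sqrt (sumSupp k x (fun i => y i ^ 2)).

Definition word_topic (D k : nat) (A : nat -> nat -> R) : Prop :=
  (forall w i, (w < D)%nat -> (i < k)%nat -> 0 <= A w i) /\
  (forall i, (i < k)%nat -> sumR D (fun w => A w i) = 1).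

Definition in_simplex (k : nat) (x : nat -> R) : Prop :=
  (forall i, (i < k)%nat -> 0 <= x i) /\ sumR k x = 1.

Definition assumpA1 (k r : nat) (tau : R) (x : nat -> R) : Prop :=
  0 < tau <= 1 /\
  sumR k (fun i => indic (supp k x i)) <= INR r /\
  (forall i, supp k x i -> x i >= tau / INR r).

Definition sparse (k r : nat) (v : nat -> R) : Prop :=
  sumR k (fun i => indic (v i <> 0)) <= INR r.

Definition assumpA2 (D k r : nat) (kappa : R) (A : nat -> nat -> R) : Prop :=
  forall v : nat -> R, sparse k r v ->
    sumR D (fun w => Rabs (sumR k (fun i => A w i * v i))) >=
    sumR k (fun i => Rabs (v i)) / kappa.

Definition is_inv_sqrt (k : nat) (x : nat -> R) (Q S : nat -> nat -> R) : Prop :=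
  (forall i j, supp k x i -> supp k x j -> S i j = S j i) /\
  (forall v : nat -> R, (exists i, supp k x i /\ v i <> 0) ->
     0 < sumSupp k x (fun i => sumSupp k x (fun j => v i * S i j * v j))) /\
  (forall i j, supp k x i -> supp k x j ->
     sumSupp k x (fun l => sumSupp k x (fun m => S i l * S l m * Q m j))
     = if Nat.eq_dec i j then 1 else 0).

(* Main.v *)
Require Import Defs.
From Stdlib Require Import Reals List Lra Psatz Classical ClassicalDescription.
Open Scope R_scope.

Lemma indic_true (P : Prop) : P -> indic P = 1.
Proof. intro H; unfold indic; destruct (excluded_middle_informative P); tauto. Qed.
Lemma indic_false (P : Prop) : ~ P -> indic P = 0.
Proof. intro H; unfold indic; destruct (excluded_middle_informative P); tauto. Qed.
Lemma indic_01 (P : Prop) : 0 <= indic P <= 1.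
Proof. unfold indic; destruct (excluded_middle_informative P); lra. Qed.
Lemma indic_mono (P Q : Prop) : (P -> Q) -> indic P <= indic Q.
Proof. intro H; unfold indic; destruct (excluded_middle_informative P);
  destruct (excluded_middle_informative Q); try lra; tauto. Qed.

Lemma sumR_ext m f g : (forall i, (i < m)%nat -> f i = g i) -> sumR m f = sumR m g.
Proof. induction m; simpl; intros H; auto. rewrite IHm by (intros; apply H; lia).
  rewrite H by lia; auto. Qed.
Lemma sumR_plus m f g : sumR m (fun i => f i + g i) = sumR m f + sumR m g.
Proof. induction m; simpl; [lra|rewrite IHm; lra]. Qed.
Lemma sumR_minus m f g : sumR m (fun i => f i - g i) = sumR m f - sumR m g.
Proof. induction m; simpl; [lra|rewrite IHm; lra]. Qed.
Lemma sumR_scal m c f : sumR m (fun i => c * f i) = c * sumR m f.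
Proof. induction m; simpl; [lra|rewrite IHm; lra]. Qed.
Lemma sumR_zero m : sumR m (fun _ => 0) = 0.
Proof. induction m; simpl; [lra|rewrite IHm; lra]. Qed.
Lemma sumR_swap m n (F : nat -> nat -> R) :
  sumR m (fun i => sumR n (fun j => F i j)) = sumR n (fun j => sumR m (fun i => F i j)).
Proof. induction m; simpl. rewrite sumR_zero; auto.
  rewrite IHm, <- sumR_plus; auto. Qed.
Lemma sumR_le m f g : (forall i, (i < m)%nat -> f i <= g i) -> sumR m f <= sumR m g.
Proof. induction m; simpl; intros H; [lra|]. specialize (IHm (fun i Hi => H i ltac:(lia))).
  specialize (H m ltac:(lia)); lra. Qed.
Lemma sumR_nonneg m f : (forall i, (i < m)%nat -> 0 <= f i) -> 0 <= sumR m f.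
Proof. intro H; rewrite <- (sumR_zero m); apply sumR_le; auto. Qed.
Lemma sumR_single m f j : (forall i, (i < m)%nat -> 0 <= f i) -> (j < m)%nat -> f j <= sumR m f.
Proof. induction m; simpl; intros H Hj; [lia|].
  destruct (Nat.eq_dec j m). subst. pose proof (sumR_nonneg m f (fun i Hi => H i ltac:(lia))); lra.
  specialize (IHm (fun i Hi => H i ltac:(lia)) ltac:(lia)). specialize (H m ltac:(lia)); lra. Qed.
Lemma sumR_const m c : sumR m (fun _ => c) = INR m * c.
Proof. induction m; simpl sumR. simpl; lra. rewrite IHm, S_INR; lra. Qed.

Lemma sumSupp_ext k x f g : (forall i, supp k x i -> f i = g i) -> sumSupp k x f = sumSupp k x g.
Proof. intro H; unfold sumSupp; apply sumR_ext; intros i Hi.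
  destruct (classic (x i = 0)). rewrite !indic_false by (unfold supp; tauto); lra.
  rewrite H; auto. split; auto. Qed.
Lemma sumSupp_plus k x f g : sumSupp k x (fun i => f i + g i) = sumSupp k x f + sumSupp k x g.
Proof. unfold sumSupp; rewrite <- sumR_plus; apply sumR_ext; intros; ring. Qed.
Lemma sumSupp_minus k x f g : sumSupp k x (fun i => f i - g i) = sumSupp k x f - sumSupp k x g.
Proof. unfold sumSupp; rewrite <- sumR_minus; apply sumR_ext; intros; ring. Qed.
Lemma sumSupp_scal k x c f : sumSupp k x (fun i => c * f i) = c * sumSupp k x f.
Proof. unfold sumSupp; rewrite <- sumR_scal; apply sumR_ext; intros; ring. Qed.
Lemma sumSupp_scalr k x c f : sumSupp k x (fun i => f i * c) = sumSupp k x f * c.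
Proof. rewrite (Rmult_comm _ c), <- sumSupp_scal. apply sumSupp_ext. intros i _. ring. Qed.
Lemma sumSupp_zero k x : sumSupp k x (fun _ => 0) = 0.
Proof. unfold sumSupp. transitivity (sumR k (fun _ => 0)). apply sumR_ext. intros; ring. apply sumR_zero. Qed.
Lemma sumSupp_le k x f g : (forall i, supp k x i -> f i <= g i) -> sumSupp k x f <= sumSupp k x g.
Proof. intro H; unfold sumSupp; apply sumR_le; intros i Hi.
  destruct (classic (x i = 0)). rewrite !indic_false by (unfold supp; tauto); lra.
  rewrite indic_true by (split; auto). specialize (H i (conj Hi H0)); lra. Qed.
Lemma sumSupp_nonneg k x f : (forall i, supp k x i -> 0 <= f i) -> 0 <= sumSupp k x f.
Proof. intro H; rewrite <- (sumSupp_zero k x); apply sumSupp_le; auto. Qed.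
Lemma sumSupp_single k x f j : (forall i, supp k x i -> 0 <= f i) -> supp k x j -> f j <= sumSupp k x f.
Proof. intros H Hj. unfold sumSupp.
  replace (f j) with (indic (supp k x j) * f j) by (rewrite indic_true; auto; ring).
  apply (sumR_single k (fun i => indic (supp k x i) * f i)); [|apply Hj].
  intros i Hi. destruct (classic (supp k x i)). rewrite indic_true; auto. specialize (H i H0); lra.
  rewrite indic_false; auto; lra. Qed.
Lemma sumSupp_swap k x m (F : nat -> nat -> R) :
  sumR m (fun w => sumSupp k x (fun j => F w j)) = sumSupp k x (fun j => sumR m (fun w => F w j)).
Proof. unfold sumSupp. rewrite sumR_swap. apply sumR_ext; intros. rewrite <- sumR_scal; auto. Qed.
Lemma sumSupp_swap2 k x (F : nat -> nat -> R) :
  sumSupp k x (fun i => sumSupp k x (fun j => F i j)) = sumSupp k x (fun j => sumSupp k x (fun i => F i j)).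
Proof. unfold sumSupp at 1. rewrite (sumR_ext _ _ (fun i => sumSupp k x (fun j => indic (supp k x i) * F i j))).
  rewrite sumSupp_swap. auto. intros; rewrite <- sumSupp_scal; auto. Qed.
Lemma sumSupp_const k x c : sumSupp k x (fun _ => c) <= INR k * Rabs c.
Proof. unfold sumSupp. rewrite <- sumR_const. apply sumR_le; intros.
  pose proof (indic_01 (supp k x i)). pose proof (Rle_abs c). pose proof (Rabs_pos c).
  destruct (Rle_dec 0 c); nra. Qed.


Lemma expect_ext p D n f g : (forall l, length l = n -> f l = g l) -> expect p D n f = expect p D n g.
Proof. revert f g; induction n; simpl; intros f g H. apply H; auto.
  apply sumR_ext; intros w _. f_equal. apply IHn. intros l Hl; apply H; simpl; auto. Qed.
Lemma expect_plus p D n f g : expect p D n (fun l => f l + g l) = expect p D n f + expect p D n g.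
Proof. revert f g; induction n; simpl; intros f g; auto.
  rewrite <- sumR_plus; apply sumR_ext; intros w _. rewrite (IHn (fun l => f (w :: l))). ring. Qed.
Lemma expect_scal p D n c f : expect p D n (fun l => c * f l) = c * expect p D n f.
Proof. revert f; induction n; simpl; intros f; auto.
  rewrite <- sumR_scal; apply sumR_ext; intros w _. rewrite (IHn (fun l => f (w :: l))). ring. Qed.
Lemma expect_zero p D n : expect p D n (fun _ => 0) = 0.
Proof. pose proof (expect_scal p D n 0 (fun _ => 0)). simpl in H. rewrite Rmult_0_l in H.
  rewrite H; ring. Qed.
Lemma expect_le p D n f g : (forall w, (w < D)%nat -> 0 <= p w) -> (forall l, f l <= g l) ->
  expect p D n f <= expect p D n g.
Proof. intros Hp; revert f g; induction n; simpl; intros f g H; auto.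
  apply sumR_le; intros w Hw. apply Rmult_le_compat_l; auto. Qed.
Lemma expect_sumR p D n m F : expect p D n (fun l => sumR m (fun i => F i l)) = sumR m (fun i => expect p D n (F i)).
Proof. induction m; simpl. apply expect_zero. rewrite expect_plus, IHm; auto. Qed.
Lemma expect_sumSupp p D n k x F : expect p D n (fun l => sumSupp k x (fun i => F i l)) = sumSupp k x (fun i => expect p D n (F i)).
Proof. unfold sumSupp. rewrite expect_sumR. apply sumR_ext; intros. apply expect_scal. Qed.

Definition foldsum (g : nat -> R) (l : list nat) : R := fold_right (fun w acc => g w + acc) 0 l.

Lemma expect_mgf p D n g a :
  expect p D n (fun l => exp (a + foldsum g l)) = exp a * (sumR D (fun w => p w * exp (g w))) ^ n.
Proof. revert a; induction n; intros a; simpl. unfold foldsum; simpl. rewrite Rplus_0_r; ring.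
  set (Z := sumR D (fun w : nat => p w * exp (g w)) ^ n).
  replace (exp a * (sumR D (fun w : nat => p w * exp (g w)) * Z)) with ((exp a * Z) * sumR D (fun w : nat => p w * exp (g w))) by ring.
  rewrite <- sumR_scal. apply sumR_ext; intros w _.
  rewrite (expect_ext p D n _ (fun l => exp ((a + g w) + foldsum g l))).
  rewrite IHn, exp_plus. unfold Z. ring. intros l _. unfold foldsum; simpl. f_equal; ring. Qed.


Definition uu k A x w j := A w j / ahat_dot k A x w - 1.
Definition YY k A x (S : nat -> nat -> R) w i := sumSupp k x (fun j => S i j * uu k A x w j).

Lemma grad_fold k A x ws j : grad k A x ws j - INR (length ws) = foldsum (fun w => uu k A x w j) ws.
Proof. induction ws. unfold grad; simpl; lra.
  unfold grad in *; unfold foldsum in *. change (length (a :: ws)) with (S (length ws)). rewrite S_INR. simpl fold_right. rewrite <- IHws. unfold uu. lra. Qed.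

Lemma sumSupp_foldsum k x (G : nat -> nat -> R) ws :
  sumSupp k x (fun j => foldsum (fun w => G w j) ws) = foldsum (fun w => sumSupp k x (fun j => G w j)) ws.
Proof. induction ws; unfold foldsum in *; simpl. apply sumSupp_zero.
  rewrite sumSupp_plus, IHws; auto. Qed.

Lemma whitened_fold k A x S n ws i : length ws = n ->
  whitened k A x S n ws i = foldsum (fun w => YY k A x S w i) ws.
Proof. intros Hl. unfold whitened, YY. rewrite <- sumSupp_foldsum.
  apply sumSupp_ext; intros j _. rewrite <- Hl, grad_fold.
  clear Hl. unfold foldsum; induction ws; simpl; [ring|]. rewrite <- IHws; ring. Qed.

Lemma foldsum_scal c g l : foldsum (fun w => c * g w) l = c * foldsum g l.
Proof. induction l; unfold foldsum in *; simpl; [ring|rewrite IHl; ring]. Qed.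

Lemma supp_pos k x i : in_simplex k x -> supp k x i -> 0 < x i.
Proof. intros [H _] [Hi Hx]. specialize (H i Hi); lra. Qed.

Lemma pd_eq k A x w : in_simplex k x -> word_prob k A x w = ahat_dot k A x w.
Proof. intros Hs. unfold word_prob, ahat_dot, sumSupp. apply sumR_ext; intros i Hi.
  destruct (classic (x i = 0)). rewrite H; ring. rewrite indic_true; [ring|split; auto]. Qed.

Lemma d_nonneg D k A x w : word_topic D k A -> in_simplex k x -> (w < D)%nat -> 0 <= ahat_dot k A x w.
Proof. intros [HA _] Hs Hw. rewrite <- pd_eq by auto. unfold word_prob. apply sumR_nonneg; intros.
  destruct Hs as [Hx _]. specialize (HA w i Hw H); specialize (Hx i H); nra. Qed.

Lemma d_single D k A x w j : word_topic D k A -> in_simplex k x -> (w < D)%nat -> supp k x j ->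
  A w j * x j <= ahat_dot k A x w.
Proof. intros [HA _] Hs Hw Hj. unfold ahat_dot.
  apply (sumSupp_single k x (fun i => A w i * x i)); auto. intros i [Hi _].
  destruct Hs as [Hx _]. specialize (HA w i Hw Hi); specialize (Hx i Hi); nra. Qed.

Lemma d_zero D k A x w j : word_topic D k A -> in_simplex k x -> (w < D)%nat -> supp k x j ->
  ahat_dot k A x w = 0 -> A w j = 0.
Proof. intros HA Hs Hw Hj H0. pose proof (d_single D k A x w j HA Hs Hw Hj).
  pose proof (supp_pos k x j Hs Hj). destruct HA as [HA _]. pose proof (HA w j Hw (proj1 Hj)). nra. Qed.

Lemma sump D k A x : word_topic D k A -> in_simplex k x -> sumR D (word_prob k A x) = 1.
Proof. intros [_ HA] [_ Hx]. unfold word_prob. rewrite sumR_swap. rewrite <- Hx.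
  apply sumR_ext; intros i Hi. rewrite (sumR_ext _ _ (fun w => x i * A w i)) by (intros; ring).
  rewrite sumR_scal, HA; auto; ring. Qed.

Lemma Eu D k A x j : word_topic D k A -> in_simplex k x -> supp k x j ->
  sumR D (fun w => word_prob k A x w * uu k A x w j) = 0.
Proof. intros HA Hs Hj. rewrite (sumR_ext _ _ (fun w => A w j - word_prob k A x w)).
  rewrite sumR_minus, sump by auto. destruct HA as [_ HA]. rewrite HA by (apply Hj). ring.
  intros w Hw. rewrite pd_eq by auto. unfold uu.
  destruct (Req_dec (ahat_dot k A x w) 0). rewrite H, (d_zero D k A x w j) by auto. unfold Rdiv; ring.
  field; auto. Qed.

Lemma Euu D k A x j l : word_topic D k A -> in_simplex k x -> supp k x j -> supp k x l ->
  sumR D (fun w => word_prob k A x w * (uu k A x w j * uu k A x w l)) = fisher D k A x j l - 1.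
Proof. intros HA Hs Hj Hl.
  rewrite (sumR_ext _ _ (fun w => indic (ahat_nz k A x w) * (A w j * A w l / ahat_dot k A x w) - A w j - A w l + word_prob k A x w)).
  rewrite !sumR_plus, !sumR_minus, sump by auto. unfold fisher. destruct HA as [HA1 HA2].
  rewrite !HA2 by (first [apply Hj | apply Hl]). ring.
  intros w Hw. rewrite pd_eq by auto. unfold uu.
  destruct (Req_dec (ahat_dot k A x w) 0). rewrite H, !(d_zero D k A x w j), !(d_zero D k A x w l) by auto. unfold Rdiv; ring.
  destruct (Req_dec (A w j) 0). rewrite H0. field; auto.
  rewrite indic_true by (exists j; auto). field; auto. Qed.


Definition mm k x (F G : nat -> nat -> R) a b := sumSupp k x (fun j => F a j * G j b).
Definition Id (a b : nat) : R := if Nat.eq_dec a b then 1 else 0.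
Definition quadform k x (M : nat -> nat -> R) (z : nat -> R) :=
  sumSupp k x (fun j => sumSupp k x (fun l => z j * M j l * z l)).

Lemma sumSupp_mul k x f g : sumSupp k x f * sumSupp k x g = sumSupp k x (fun j => sumSupp k x (fun l => f j * g l)).
Proof. rewrite <- sumSupp_scalr. apply sumSupp_ext; intros j _. rewrite <- sumSupp_scal; auto. Qed.

Lemma mm_assoc k x F G H a b : mm k x (mm k x F G) H a b = mm k x F (mm k x G H) a b.
Proof. unfold mm. rewrite (sumSupp_ext k x _ (fun l => sumSupp k x (fun j => F a j * G j l * H l b))).
  rewrite sumSupp_swap2. apply sumSupp_ext; intros j _. rewrite <- sumSupp_scal.
  apply sumSupp_ext; intros; ring. intros l _. rewrite <- sumSupp_scalr; auto. Qed.

Lemma mm_ext_l k x F F' G a b : (forall j, supp k x j -> F a j = F' a j) -> mm k x F G a b = mm k x F' G a b.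
Proof. intros H; unfold mm; apply sumSupp_ext; intros j Hj; rewrite H; auto. Qed.
Lemma mm_ext_r k x F G G' a b : (forall j, supp k x j -> G j b = G' j b) -> mm k x F G a b = mm k x F G' a b.
Proof. intros H; unfold mm; apply sumSupp_ext; intros j Hj; rewrite H; auto. Qed.

Lemma sumR_one m g a : (a < m)%nat -> (forall j, (j < m)%nat -> j <> a -> g j = 0) -> sumR m g = g a.
Proof. induction m; simpl; intros Ha H; [lia|]. destruct (Nat.eq_dec a m).
  subst. rewrite (sumR_ext _ _ (fun _ => 0)), sumR_zero; [ring|]. intros; apply H; lia.
  rewrite IHm; [rewrite (H m); [ring|lia|lia] | lia | intros; apply H; lia]. Qed.

Lemma sumSupp_one k x f a : supp k x a -> (forall j, supp k x j -> j <> a -> f j = 0) -> sumSupp k x f = f a.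
Proof. intros Ha H. unfold sumSupp. rewrite (sumR_one k _ a). rewrite indic_true; auto; ring.
  apply Ha. intros j Hj Hja. destruct (classic (supp k x j)). rewrite H; auto; ring.
  rewrite indic_false; auto; ring. Qed.

Lemma mm_Id_l k x G a b : supp k x a -> mm k x Id G a b = G a b.
Proof. intros Ha; unfold mm. rewrite (sumSupp_one _ _ _ a); auto. unfold Id; destruct (Nat.eq_dec a a); [ring|lia].
  intros j _ Hj. unfold Id; destruct (Nat.eq_dec a j); [lia|ring]. Qed.

Lemma SSQ_conv k x Q S : is_inv_sqrt k x Q S ->
  forall i j, supp k x i -> supp k x j -> mm k x S (mm k x S Q) i j = Id i j.
Proof. intros [_ [_ H]] i j Hi Hj. unfold Id; rewrite <- H by auto. unfold mm. apply sumSupp_ext; intros l _.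
  rewrite <- sumSupp_scal. apply sumSupp_ext; intros; ring. Qed.

Lemma T_idem k x Q S a b : is_inv_sqrt k x Q S -> supp k x a -> supp k x b ->
  mm k x (mm k x (mm k x S Q) S) (mm k x (mm k x S Q) S) a b = mm k x (mm k x S Q) S a b.
Proof. intros HS Ha Hb. rewrite mm_assoc. apply mm_ext_r; intros j Hj.
  rewrite <- mm_assoc. rewrite (mm_ext_l _ _ _ Id). apply mm_Id_l; auto.
  intros l Hl. apply SSQ_conv; auto. Qed.

Lemma fisher_sym D k A x j l : fisher D k A x j l = fisher D k A x l j.
Proof. unfold fisher; apply sumR_ext; intros; f_equal; unfold Rdiv; ring. Qed.

Lemma T_sym D k A x S a b : is_inv_sqrt k x (fisher D k A x) S -> supp k x a -> supp k x b ->
  mm k x (mm k x S (fisher D k A x)) S a b = mm k x (mm k x S (fisher D k A x)) S b a.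
Proof. intros [HS _] Ha Hb. unfold mm.
  rewrite (sumSupp_ext k x _ (fun l => sumSupp k x (fun j => S a j * fisher D k A x j l * S l b))).
  rewrite (sumSupp_ext k x (fun j => sumSupp k x (fun j0 => S b j0 * fisher D k A x j0 j) * S j a)
     (fun l => sumSupp k x (fun j => S b j * fisher D k A x j l * S l a))).
  rewrite sumSupp_swap2. apply sumSupp_ext; intros l Hl. apply sumSupp_ext; intros j Hj.
  rewrite (HS a l), (HS j b), (fisher_sym D k A x l j) by auto. ring.
  all: intros l _; rewrite <- sumSupp_scalr; auto. Qed.

Lemma T_le1 D k A x S i : is_inv_sqrt k x (fisher D k A x) S -> supp k x i ->
  mm k x (mm k x S (fisher D k A x)) S i i <= 1.
Proof. intros HS Hi. set (T := mm k x (mm k x S (fisher D k A x)) S).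
  assert (E : T i i = sumSupp k x (fun b => T i b ^ 2)).
  { unfold T at 1; rewrite <- (T_idem k x _ S i i) by auto. fold T. unfold mm at 1.
    apply sumSupp_ext; intros b Hb. unfold T; rewrite (T_sym D k A x S b i) by auto. ring. }
  assert (T i i ^ 2 <= T i i). { rewrite E at 2. apply (sumSupp_single k x (fun b => T i b ^ 2)); auto.
    intros; apply pow2_ge_0. }
  nra. Qed.


Lemma EY0 D k A x S i : word_topic D k A -> in_simplex k x ->
  sumR D (fun w => word_prob k A x w * YY k A x S w i) = 0.
Proof. intros HA Hs. unfold YY.
  rewrite (sumR_ext _ _ (fun w => sumSupp k x (fun j => S i j * (word_prob k A x w * uu k A x w j)))).
  rewrite sumSupp_swap. rewrite <- (sumSupp_zero k x). apply sumSupp_ext; intros j Hj.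
  rewrite sumR_scal, Eu by auto; ring.
  intros w _; rewrite <- sumSupp_scal; apply sumSupp_ext; intros; ring. Qed.

Lemma EY2 D k A x S i : word_topic D k A -> in_simplex k x -> is_inv_sqrt k x (fisher D k A x) S -> supp k x i ->
  sumR D (fun w => word_prob k A x w * YY k A x S w i ^ 2) <= 1.
Proof. intros HA Hs HS Hi. eapply Rle_trans; [|apply (T_le1 D k A x S i); auto].
  unfold YY.
  rewrite (sumR_ext _ _ (fun w => sumSupp k x (fun j => sumSupp k x (fun l =>
     S i j * S i l * (word_prob k A x w * (uu k A x w j * uu k A x w l)))))).
  rewrite sumSupp_swap.
  rewrite (sumSupp_ext k x _ (fun j => sumSupp k x (fun l => S i j * S i l * (fisher D k A x j l - 1)))).
  unfold mm. rewrite (sumSupp_ext k x (fun j => sumSupp k x (fun j0 => S i j0 * fisher D k A x j0 j) * S j i)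
    (fun l => sumSupp k x (fun j => S i j * S i l * fisher D k A x j l))).
  rewrite sumSupp_swap2.
  assert (0 <= sumSupp k x (fun j => S i j) ^ 2) by apply pow2_ge_0.
  rewrite (sumSupp_ext k x (fun l => sumSupp k x (fun j => S i j * S i l * (fisher D k A x j l - 1)))
    (fun l => sumSupp k x (fun j => S i j * S i l * fisher D k A x j l) - sumSupp k x (fun j => S i l * S i j))).
  rewrite sumSupp_minus. rewrite <- (sumSupp_mul k x (fun j => S i j) (fun l => S i l)) . simpl in H. nra.
  intros j _. rewrite <- sumSupp_minus. apply sumSupp_ext; intros; ring.
  intros l Hl. rewrite <- sumSupp_scalr. destruct HS as [HS _]. rewrite (HS l i) by auto.
  apply sumSupp_ext; intros; ring.
  intros j Hj. rewrite sumSupp_swap. apply sumSupp_ext; intros l Hl. rewrite sumR_scal, Euu by auto. ring.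
  intros w _. simpl. rewrite Rmult_1_r, sumSupp_mul, <- sumSupp_scal. apply sumSupp_ext; intros j _.
  rewrite <- sumSupp_scal. apply sumSupp_ext; intros; ring. Qed.


Definition sw k (A : nat -> nat -> R) x z (w : nat) := sumSupp k x (fun j => A w j * z j).

Lemma quad_fisher D k A x z : quadform k x (fisher D k A x) z =
  sumR D (fun w => indic (ahat_nz k A x w) * sw k A x z w ^ 2 / ahat_dot k A x w).
Proof. unfold quadform, fisher.
  rewrite (sumSupp_ext k x _ (fun j => sumSupp k x (fun l => sumR D (fun w =>
     indic (ahat_nz k A x w) / ahat_dot k A x w * ((A w j * z j) * (A w l * z l)))))).
  rewrite (sumSupp_ext k x _ (fun j => sumR D (fun w => sumSupp k x (fun l =>
     indic (ahat_nz k A x w) / ahat_dot k A x w * ((A w j * z j) * (A w l * z l)))))).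
  rewrite <- sumSupp_swap. apply sumR_ext; intros w _.
  unfold sw. simpl. rewrite Rmult_1_r, sumSupp_mul.
  replace (indic (ahat_nz k A x w) * sumSupp k x (fun j => sumSupp k x (fun l => A w j * z j * (A w l * z l))) / ahat_dot k A x w)
   with (indic (ahat_nz k A x w) / ahat_dot k A x w * sumSupp k x (fun j => sumSupp k x (fun l => A w j * z j * (A w l * z l)))) by (unfold Rdiv; ring).
  rewrite <- sumSupp_scal.
  apply sumSupp_ext; intros j _. rewrite <- sumSupp_scal. apply sumSupp_ext; intros; ring.
  intros j _. rewrite sumSupp_swap. auto.
  intros j _. apply sumSupp_ext; intros l _. rewrite <- sumR_scal, Rmult_comm, <- sumR_scal.
  apply sumR_ext; intros; unfold Rdiv; ring. Qed.

Lemma sumSupp_abs k x f : Rabs (sumSupp k x f) <= sumSupp k x (fun j => Rabs (f j)).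
Proof. apply Rabs_le. split.
  assert (sumSupp k x (fun j => - Rabs (f j)) <= sumSupp k x f).
  { apply sumSupp_le; intros. pose proof (Rle_abs (- f i)). rewrite Rabs_Ropp in H0. lra. }
  assert (sumSupp k x (fun j => - Rabs (f j)) = - sumSupp k x (fun j => Rabs (f j))).
  { rewrite <- (Rmult_1_l (sumSupp k x (fun j => Rabs (f j)))), Ropp_mult_distr_l, <- sumSupp_scal.
    apply sumSupp_ext; intros; ring. }
  lra.
  apply sumSupp_le; intros; apply Rle_abs. Qed.

Lemma sumSupp_nz k x f : sumSupp k x f <> 0 -> exists j, supp k x j /\ f j <> 0.
Proof. intros H. apply NNPP; intro C. apply H. rewrite <- (sumSupp_zero k x). apply sumSupp_ext.
  intros j Hj. apply NNPP; intro C2; apply C; eauto. Qed.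

Lemma A2_quad D k A x r kappa z : word_topic D k A -> in_simplex k x -> assumpA1 k r 1 x \/ True ->
  sumR k (fun i => indic (supp k x i)) <= INR r -> 0 < kappa -> assumpA2 D k r kappa A ->
  sumSupp k x (fun j => Rabs (z j)) ^ 2 <= kappa ^ 2 * quadform k x (fisher D k A x) z.
Proof. intros HA Hs _ Hr Hk H2. set (N := sumSupp k x (fun j => Rabs (z j))).
  set (V := quadform k x (fisher D k A x) z).
  assert (HN : 0 <= N) by (apply sumSupp_nonneg; intros; apply Rabs_pos).
  assert (Hw : forall alpha, 0 < alpha -> forall w, (w < D)%nat ->
     Rabs (sw k A x z w) <= alpha * word_prob k A x w / 2 +
       (indic (ahat_nz k A x w) * sw k A x z w ^ 2 / ahat_dot k A x w) / (2 * alpha)).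
  { intros al Hal w Hw. rewrite pd_eq by auto. pose proof (d_nonneg D k A x w HA Hs Hw).
    destruct (Req_dec (ahat_dot k A x w) 0) as [E|E].
    - assert (sw k A x z w = 0). { unfold sw. rewrite <- (sumSupp_zero k x). apply sumSupp_ext.
        intros j Hj. rewrite (d_zero D k A x w j) by auto. ring. }
      rewrite H0, E, Rabs_R0. unfold Rdiv; rewrite Rinv_0. lra.
    - destruct (Req_dec (sw k A x z w) 0) as [E2|E2].
      + rewrite E2, Rabs_R0. assert (0 < ahat_dot k A x w) by lra.
        pose proof (indic_01 (ahat_nz k A x w)).
        assert (0 <= indic (ahat_nz k A x w) * 0 ^ 2 / ahat_dot k A x w / (2 * al)).
        { apply Rmult_le_pos. apply Rmult_le_pos. nra. left; apply Rinv_0_lt_compat; lra.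
          left; apply Rinv_0_lt_compat; lra. }
        nra.
      + rewrite indic_true. 2:{ destruct (sumSupp_nz _ _ _ E2) as [j [Hj Hj2]]. exists j; split; auto.
          intro C; apply Hj2; rewrite C; ring. }
        assert (0 < ahat_dot k A x w) by lra. set (d := ahat_dot k A x w) in *. set (s := sw k A x z w) in *.
        assert (Rabs s * Rabs s = s ^ 2) by (rewrite <- Rabs_mult; simpl; rewrite Rmult_1_r; apply Rabs_pos_eq; nra).
        pose proof (Rabs_pos s).
        apply (Rmult_le_reg_r (2 * al * d)). nra.
        replace ((al * d / 2 + 1 * s ^ 2 / d / (2 * al)) * (2 * al * d)) with (al ^ 2 * d ^ 2 + s ^ 2) by (field; lra).
        pose proof (pow2_ge_0 (Rabs s - al * d)). nra. }
  destruct (Req_dec N 0) as [N0|N0].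
  { rewrite N0. assert (0 <= V). { unfold V; rewrite quad_fisher. apply sumR_nonneg; intros w Hw0.
      pose proof (indic_01 (ahat_nz k A x w)). pose proof (d_nonneg D k A x w HA Hs Hw0).
      apply Rmult_le_pos. apply Rmult_le_pos; [lra|apply pow2_ge_0]. destruct (Req_dec (ahat_dot k A x w) 0) as [E3|E3].
      rewrite E3; rewrite Rinv_0; lra. left; apply Rinv_0_lt_compat; lra. }
    simpl; nra. }
  set (al := N / kappa). assert (Hal : 0 < al) by (unfold al; apply Rdiv_lt_0_compat; lra).
  assert (Hsum : sumR D (fun w => Rabs (sw k A x z w)) <= al / 2 + V / (2 * al)).
  { eapply Rle_trans. apply sumR_le. intros w Hw1. apply (Hw al Hal w Hw1).
    rewrite sumR_plus. unfold Rdiv. rewrite (sumR_ext _ _ (fun w => (al * / 2) * word_prob k A x w)) by (intros; ring).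
    rewrite sumR_scal, sump by auto.
    rewrite (sumR_ext _ _ (fun w => / (2 * al) * (indic (ahat_nz k A x w) * sw k A x z w ^ 2 * / ahat_dot k A x w))) by (intros; ring).
    rewrite sumR_scal. unfold V. rewrite quad_fisher. unfold Rdiv. lra. }
  assert (HA2 : sumR D (fun w => Rabs (sw k A x z w)) >= N / kappa).
  { set (v := fun i => indic (supp k x i) * z i).
    assert (Hsp : sparse k r v). { unfold sparse. eapply Rle_trans; [|apply Hr]. apply sumR_le; intros i Hi.
      apply indic_mono. intros Hv. apply NNPP; intro C. apply Hv. unfold v. rewrite indic_false; auto; ring. }
    specialize (H2 v Hsp).
    replace (sumR D (fun w => Rabs (sw k A x z w))) with (sumR D (fun w => Rabs (sumR k (fun i => A w i * v i)))).
    replace N with (sumR k (fun i => Rabs (v i))). auto.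
    unfold N, sumSupp, v. apply sumR_ext; intros. rewrite Rabs_mult. f_equal. apply Rabs_pos_eq. apply indic_01.
    apply sumR_ext; intros w _. f_equal. unfold sw, sumSupp, v. apply sumR_ext; intros; ring. }
  assert (N / kappa <= N / (2 * kappa) + V * kappa / (2 * N)).
  { replace (N / (2 * kappa) + V * kappa / (2 * N)) with (al / 2 + V / (2 * al)) by (unfold al; field; lra). lra. }
  assert (N / (2 * kappa) <= V * kappa / (2 * N)) by (replace (N / kappa) with (2 * (N / (2 * kappa))) in H by (field; lra); lra).
  apply (Rmult_le_compat_r (2 * N * kappa)) in H0; [|nra].
  replace (N / (2 * kappa) * (2 * N * kappa)) with (N ^ 2) in H0 by (field; lra).
  replace (V * kappa / (2 * N) * (2 * N * kappa)) with (kappa ^ 2 * V) in H0 by (field; lra). auto. Qed.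


Lemma P_sym k x S i l : (forall a b, supp k x a -> supp k x b -> S a b = S b a) -> supp k x i -> supp k x l ->
  mm k x S S l i = mm k x S S i l.
Proof. intros HS Hi Hl. unfold mm. apply sumSupp_ext; intros m Hm. rewrite (HS l m), (HS m i) by auto; ring. Qed.

Lemma P_quad D k A x S i : is_inv_sqrt k x (fisher D k A x) S -> supp k x i ->
  quadform k x (fisher D k A x) (fun j => mm k x S S i j) = mm k x S S i i.
Proof. intros HS Hi. set (P := mm k x S S).
  transitivity (mm k x (mm k x P (fisher D k A x)) P i i).
  - unfold quadform, mm at 1. rewrite sumSupp_swap2. apply sumSupp_ext; intros l Hl.
    assert (E : P l i = P i l) by (unfold P; apply P_sym; auto; apply HS). rewrite E. unfold mm at 1.
    rewrite <- sumSupp_scalr. apply sumSupp_ext; intros; ring.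
  - rewrite (mm_ext_l _ _ _ Id). apply mm_Id_l; auto. intros j Hj. unfold P. rewrite mm_assoc.
    apply SSQ_conv; auto. Qed.

Lemma P_le D k A x r tau kappa S i : word_topic D k A -> in_simplex k x -> assumpA1 k r tau x ->
  0 < kappa -> assumpA2 D k r kappa A -> is_inv_sqrt k x (fisher D k A x) S -> supp k x i ->
  mm k x S S i i <= kappa ^ 2.
Proof. intros HA Hs [_ [Hr _]] Hk H2 HS Hi.
  pose proof (A2_quad D k A x r kappa (fun j => mm k x S S i j) HA Hs (or_intror I) Hr Hk H2).
  rewrite P_quad in H by auto.
  assert (Rabs (mm k x S S i i) <= sumSupp k x (fun j => Rabs (mm k x S S i j))).
  { apply (sumSupp_single k x (fun j => Rabs (mm k x S S i j))); auto. intros; apply Rabs_pos. }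
  pose proof (Rabs_pos (mm k x S S i i)). pose proof (Rle_abs (mm k x S S i i)).
  assert (Rabs (mm k x S S i i) ^ 2 <= sumSupp k x (fun j => Rabs (mm k x S S i j)) ^ 2) by (apply pow_incr; lra).
  set (m := mm k x S S i i) in *. set (N := sumSupp k x (fun j : nat => Rabs (mm k x S S i j))) in *. assert (Rabs m ^ 2 <= kappa ^ 2 * Rabs m) by nra.
  destruct (Rle_dec m (kappa ^ 2)); auto. nra. Qed.

Lemma S_bound D k A x r tau kappa S i j : word_topic D k A -> in_simplex k x -> assumpA1 k r tau x ->
  0 < kappa -> assumpA2 D k r kappa A -> is_inv_sqrt k x (fisher D k A x) S -> supp k x i -> supp k x j ->
  Rabs (S i j) <= kappa.
Proof. intros HA Hs H1 Hk H2 HS Hi Hj. pose proof (P_le D k A x r tau kappa S i HA Hs H1 Hk H2 HS Hi).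
  assert (S i j ^ 2 <= mm k x S S i i).
  { unfold mm. rewrite (sumSupp_ext k x _ (fun l => S i l ^ 2)).
    apply (sumSupp_single k x (fun l => S i l ^ 2)); auto. intros; apply pow2_ge_0.
    intros l Hl. destruct HS as [HS _]. rewrite (HS l i) by auto; ring. }
  rewrite <- Rsqr_pow2, Rsqr_abs, Rsqr_pow2 in H0. pose proof (Rabs_pos (S i j)).
  destruct (Rle_dec (Rabs (S i j)) kappa); auto. nra. Qed.

Lemma Y_bound D k A x r tau kappa S w i : word_topic D k A -> in_simplex k x -> assumpA1 k r tau x ->
  0 < kappa -> assumpA2 D k r kappa A -> is_inv_sqrt k x (fisher D k A x) S -> supp k x i ->
  (w < D)%nat -> ahat_dot k A x w <> 0 ->
  Rabs (YY k A x S w i) <= kappa * (2 * INR r / tau).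
Proof. intros HA Hs H1 Hk H2 HS Hi Hw Hd. pose proof (d_nonneg D k A x w HA Hs Hw) as Hd0.
  set (d := ahat_dot k A x w) in *. assert (Hdp : 0 < d) by lra.
  destruct H1 as [Ht [Hr Hx]].
  assert (Hr1 : 1 <= INR r).
  { eapply Rle_trans; [|apply Hr]. rewrite <- (indic_true (supp k x i)) by auto.
    apply (sumR_single k (fun l => indic (supp k x l)) i). intros; apply indic_01. apply Hi. }
  unfold YY. eapply Rle_trans. apply sumSupp_abs.
  eapply Rle_trans. apply (sumSupp_le k x _ (fun j => kappa * (A w j / d + 1))).
  { intros j Hj. rewrite Rabs_mult. pose proof (S_bound D k A x r tau kappa S i j HA Hs (conj Ht (conj Hr Hx)) Hk H2 HS Hi Hj).
    unfold uu. fold d. destruct HA as [HA _]. pose proof (HA w j Hw (proj1 Hj)).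
    assert (0 <= A w j / d) by (unfold Rdiv; apply Rmult_le_pos; [lra|left; apply Rinv_0_lt_compat; lra]).
    assert (Rabs (A w j / d - 1) <= A w j / d + 1) by (apply Rabs_le; lra).
    apply Rmult_le_compat; auto; apply Rabs_pos. }
  rewrite sumSupp_scal, sumSupp_plus. apply Rmult_le_compat_l; [lra|].
  assert (Hm : sumSupp k x (fun _ => 1) <= INR r).
  { eapply Rle_trans; [|apply Hr]. unfold sumSupp; apply sumR_le; intros; lra. }
  assert (HsA : sumSupp k x (fun j => A w j) * (tau / INR r) <= d).
  { rewrite <- sumSupp_scalr. unfold d, ahat_dot. apply sumSupp_le; intros j Hj.
    destruct HA as [HA _]. pose proof (HA w j Hw (proj1 Hj)). specialize (Hx j Hj). nra. }
  assert (sumSupp k x (fun j => A w j / d) <= INR r / tau).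
  { unfold Rdiv at 1. rewrite sumSupp_scalr.
    apply (Rmult_le_reg_r (d * (tau / INR r))). apply Rmult_lt_0_compat; [lra|apply Rdiv_lt_0_compat; lra].
    change (sumSupp k x (A w)) with (sumSupp k x (fun j => A w j)). set (sA := sumSupp k x (fun j => A w j)) in *. replace (sA * / d * (d * (tau / INR r))) with (sA * (tau / INR r)) by (field; lra).
    replace (INR r / tau * (d * (tau / INR r))) with d by (field; lra). lra. }
  assert (INR r <= INR r / tau). { apply (Rmult_le_reg_r tau). lra. replace (INR r / tau * tau) with (INR r) by (field; lra). nra. }
  replace (2 * INR r / tau) with (INR r / tau + INR r / tau) by (field; lra). lra. Qed.


Lemma exp_quad y : y <= 1/2 -> exp y <= 1 + y + 2 * y ^ 2.
Proof. intros Hy. pose proof (exp_ineq1_le (- y)). pose proof (exp_pos y).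
  assert (exp y * exp (- y) = 1) by (rewrite <- exp_plus; replace (y + - y) with 0 by ring; apply exp_0).
  assert (exp y * (1 - y) <= 1) by nra.
  assert (1 <= (1 + y + 2 * y ^ 2) * (1 - y)). { pose proof (pow2_ge_0 y). simpl. nra. }
  nra. Qed.

Lemma exp_pow y n : exp y ^ n = exp (INR n * y).
Proof. induction n. simpl. rewrite Rmult_0_l, exp_0; auto.
  rewrite S_INR, <- tech_pow_Rmult, IHn, <- exp_plus. f_equal; ring. Qed.

Lemma mu_bound D k A x S i c : word_topic D k A -> in_simplex k x -> is_inv_sqrt k x (fisher D k A x) S -> supp k x i ->
  (forall w, (w < D)%nat -> ahat_dot k A x w <> 0 -> c * YY k A x S w i <= 1/2) ->
  sumR D (fun w => word_prob k A x w * exp (c * YY k A x S w i)) <= 1 + 2 * c ^ 2.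
Proof. intros HA Hs HS Hi Hc.
  eapply Rle_trans. apply (sumR_le _ _ (fun w => word_prob k A x w * 1 + c * (word_prob k A x w * YY k A x S w i)
     + 2 * c ^ 2 * (word_prob k A x w * YY k A x S w i ^ 2))).
  { intros w Hw. rewrite pd_eq by auto. destruct (Req_dec (ahat_dot k A x w) 0) as [E|E].
    rewrite E; lra. pose proof (exp_quad _ (Hc w Hw E)). pose proof (d_nonneg D k A x w HA Hs Hw).
    replace (ahat_dot k A x w * 1 + c * (ahat_dot k A x w * YY k A x S w i) + 2 * c ^ 2 * (ahat_dot k A x w * YY k A x S w i ^ 2))
      with (ahat_dot k A x w * (1 + c * YY k A x S w i + 2 * (c * YY k A x S w i) ^ 2)) by ring.
    apply Rmult_le_compat_l; auto. }
  rewrite !sumR_plus, !sumR_scal, EY0 by auto.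
  rewrite (sumR_ext _ _ (word_prob k A x)) by (intros; ring). rewrite sump by auto.
  pose proof (EY2 D k A x S i HA Hs HS Hi). pose proof (pow2_ge_0 c). nra. Qed.

Lemma sumSupp_const_eq k x c : sumSupp k x (fun _ => c) = sumR k (fun i => indic (supp k x i)) * c.
Proof. unfold sumSupp. rewrite Rmult_comm, <- sumR_scal. apply sumR_ext; intros; ring. Qed.

Lemma norm_bound k x r W t : 0 <= t -> sumR k (fun i => indic (supp k x i)) <= INR r ->
  (forall i, supp k x i -> Rabs (W i) <= t) -> norm2_supp k x W <= t * sqrt (INR r).
Proof. intros Ht Hr H. unfold norm2_supp. rewrite <- (sqrt_square t) at 1 by auto.
  rewrite <- sqrt_mult by (try nra; apply pos_INR). apply sqrt_le_1_alt.
  eapply Rle_trans. apply (sumSupp_le k x _ (fun _ => t * t)). intros i Hi. specialize (H i Hi).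
  pose proof (Rabs_pos (W i)). rewrite <- Rsqr_pow2, Rsqr_abs. unfold Rsqr. nra.
  rewrite sumSupp_const_eq. assert (0 <= t * t) by nra. nra. Qed.


Theorem lemma5p2 :
  exists c : R, 0 < c /\
  exists (C : R) (p : nat), 0 < C /\
  forall eps : R, 0 < eps ->
  exists K : nat,
  forall (D k : nat) (A : nat -> nat -> R) (x : nat -> R) (r : nat)
         (tau kappa : R) (n : nat) (S : nat -> nat -> R),
    word_topic D k A ->
    in_simplex k x ->
    assumpA1 k r tau x ->
    0 < kappa ->
    assumpA2 D k r kappa A ->
    is_inv_sqrt k x (fisher D k A x) S ->
    INR n >= c * kappa ^ 2 * INR r ^ 2 * ln (INR k) / tau ^ 2 ->
    (K <= k)%nat ->
    prob (word_prob k A x) D n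
      (fun ws =>
         norm2_supp k x (whitened k A x S n ws)
           > C * ln (INR k) ^ p * sqrt (INR n * INR r)
         \/
         exists i, supp k x i /\
           Rabs (whitened k A x S n ws i) > C * ln (INR k) ^ p * sqrt (INR n))
    <= eps.
Proof.
  exists 4. split; [lra|]. exists 6, 1%nat. split; [lra|].
  intros eps Heps.
  destruct (archimed_cor1 (eps/4)) as [N [HN HN0]]; [lra|].
  exists (Nat.max 3 N).
  intros D k A x r tau kappa n S HA Hs H1 Hk H2 HS Hn HK.
  assert (Hk3 : 3 <= INR k) by (replace 3 with (INR 3) by (simpl; ring); apply le_INR; lia).
  assert (HkN : INR N <= INR k) by (apply le_INR; lia).
  assert (HN0' : 0 < INR N) by (apply lt_0_INR; lia).
  assert (HL : 1 <= ln (INR k)). { destruct (Rle_dec 1 (ln (INR k))); auto. exfalso.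
     assert (exp (ln (INR k)) < exp 1) by (apply exp_increasing; lra). rewrite exp_ln in H by lra.
     pose proof exp_le_3. lra. }
  set (L := ln (INR k)) in *.
  assert (Hex : exists i0, supp k x i0).
  { apply NNPP; intro C. destruct Hs as [_ Hsum]. assert (sumR k x = 0).
    rewrite <- (sumR_zero k). apply sumR_ext; intros i Hi.
    apply NNPP; intro C2. apply C; exists i; split; auto. lra. }
  destruct Hex as [i0 Hi0].
  pose proof H1 as [Ht [Hr Hx]].
  assert (Hr1 : 1 <= INR r).
  { eapply Rle_trans; [|apply Hr]. rewrite <- (indic_true (supp k x i0)) by auto.
    apply (sumR_single k (fun l => indic (supp k x l)) i0). intros; apply indic_01. apply Hi0. }
  set (M := kappa * (2 * INR r / tau)).
  assert (HM0 : 0 < M) by (unfold M; apply Rmult_lt_0_compat; [lra|apply Rdiv_lt_0_compat; lra]).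
  assert (HM : M * M <= INR n).
  { assert (E : 4 * kappa ^ 2 * INR r ^ 2 * L / tau ^ 2 = (M * M) * L) by (unfold M; field; lra).
    rewrite E in Hn. nra. }
  assert (Hnpos : 0 < INR n) by nra.
  set (sn := sqrt (INR n)).
  assert (Hsn : 0 < sn) by (apply sqrt_lt_R0; auto).
  assert (Hsn2 : sn * sn = INR n) by (apply sqrt_sqrt; lra).
  assert (HMs : M <= sn) by (rewrite <- (sqrt_square M) by lra; apply sqrt_le_1_alt; auto).
  set (lam := / (2 * sn)).
  assert (Hlam : 0 < lam) by (apply Rinv_0_lt_compat; lra).
  assert (Hlsn : lam * sn = 1/2) by (unfold lam; field; lra).
  assert (HY : forall i w, supp k x i -> (w < D)%nat -> ahat_dot k A x w <> 0 -> Rabs (YY k A x S w i) <= sn).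
  { intros i w Hi Hw Hd. eapply Rle_trans; [apply (Y_bound D k A x r tau kappa S w i); auto|]. fold M; lra. }
  set (t := 6 * L ^ 1 * sn).
  set (F := fun l => sumSupp k x (fun i => exp (lam * whitened k A x S n l i - lam * t)
                                          + exp (- lam * whitened k A x S n l i - lam * t))).
  assert (Hp : forall w, (w < D)%nat -> 0 <= word_prob k A x w).
  { intros w Hw; rewrite pd_eq by auto; apply d_nonneg with D; auto. }
  unfold prob. eapply Rle_trans. apply (expect_le _ _ _ _ F Hp).
  { intros l. destruct (classic (exists i, supp k x i /\ Rabs (whitened k A x S n l i) > t)) as [[i [Hi Hw]] | Hno].
    - unfold indic. destruct (excluded_middle_informative _); [|unfold F; apply sumSupp_nonneg; intros;
         pose proof (exp_pos (lam * whitened k A x S n l i1 - lam * t));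
         pose proof (exp_pos (- lam * whitened k A x S n l i1 - lam * t)); lra].
      unfold F. eapply Rle_trans; [|apply (sumSupp_single k x (fun i => exp (lam * whitened k A x S n l i - lam * t)
                                          + exp (- lam * whitened k A x S n l i - lam * t)) i)]; auto.
      2:{ intros j _. pose proof (exp_pos (lam * whitened k A x S n l j - lam * t));
         pose proof (exp_pos (- lam * whitened k A x S n l j - lam * t)); lra. }
      pose proof (exp_pos (lam * whitened k A x S n l i - lam * t));
      pose proof (exp_pos (- lam * whitened k A x S n l i - lam * t)).
      pose proof (exp_ineq1_le (lam * whitened k A x S n l i - lam * t)).
      pose proof (exp_ineq1_le (- lam * whitened k A x S n l i - lam * t)).
      destruct (Rle_dec 0 (whitened k A x S n l i)).
      + rewrite Rabs_pos_eq in Hw by auto. nra.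
      + rewrite Rabs_left in Hw by lra. nra.
    - rewrite indic_false. unfold F; apply sumSupp_nonneg; intros;
         pose proof (exp_pos (lam * whitened k A x S n l i - lam * t));
         pose proof (exp_pos (- lam * whitened k A x S n l i - lam * t)); lra.
      intros [Hnorm | [i [Hi Hw]]].
      + assert (Hall : forall i, supp k x i -> Rabs (whitened k A x S n l i) <= t).
        { intros i Hi. destruct (Rle_dec (Rabs (whitened k A x S n l i)) t); auto. exfalso; apply Hno; exists i; split; auto; lra. }
        pose proof (norm_bound k x r (whitened k A x S n l) t ltac:(unfold t; simpl; nra) Hr Hall).
        rewrite sqrt_mult in Hnorm by lra. fold sn L in Hnorm. unfold t in H. lra.
      + apply Hno; exists i; split; auto. }
  set (c0 := exp (- (lam * t))).
  set (mup := sumR D (fun w => word_prob k A x w * exp (lam * YY k A x S w 0))).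
  rewrite (expect_ext _ _ _ F (fun l => sumSupp k x (fun i =>
     exp (- (lam * t) + foldsum (fun w => lam * YY k A x S w i) l) +
     exp (- (lam * t) + foldsum (fun w => - lam * YY k A x S w i) l)))).
  2:{ intros l Hl. unfold F. apply sumSupp_ext; intros i Hi. rewrite !foldsum_scal, (whitened_fold k A x S n l i Hl).
      f_equal; f_equal; ring. }
  rewrite expect_sumSupp.
  assert (Hmu : forall c, Rabs c = lam -> forall i, supp k x i ->
    sumR D (fun w => word_prob k A x w * exp (c * YY k A x S w i)) ^ n <= 2).
  { intros c Hc i Hi. eapply Rle_trans. apply pow_incr. split.
    apply sumR_nonneg; intros w Hw. pose proof (Hp w Hw). pose proof (exp_pos (c * YY k A x S w i)). nra.
    apply mu_bound; auto. intros w Hw Hd. specialize (HY i w Hi Hw Hd).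
    eapply Rle_trans. apply Rle_abs. rewrite Rabs_mult, Hc. pose proof (Rabs_pos (YY k A x S w i)).
    apply Rmult_le_compat_l with (r := lam) in HY; lra.
    eapply Rle_trans. apply pow_incr. split. pose proof (pow2_ge_0 c); lra. apply exp_ineq1_le.
    rewrite exp_pow. assert (Rabs c ^ 2 = c ^ 2) by (rewrite <- !Rsqr_pow2; symmetry; apply Rsqr_abs).
    replace (INR n * (2 * c ^ 2)) with (1/2). 2:{ rewrite <- H, Hc, <- Hsn2. unfold lam. field. lra. }
    assert (exp (1/2) * exp (1/2) = exp 1) by (rewrite <- exp_plus; f_equal; lra).
    pose proof exp_le_3. pose proof (exp_pos (1/2)). nra. }
  assert (Hc0 : c0 * (INR k * INR k * INR k) = 1).
  { unfold c0. replace (lam * t) with (INR 3 * L). 2:{ unfold t, lam. simpl. field. lra. }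
    pose proof (exp_pow L 3) as E. unfold L in E. rewrite exp_ln in E by lra. fold L in E. rewrite exp_Ropp, <- E.
    simpl. field. lra. }
  eapply Rle_trans. apply (sumSupp_le k x _ (fun _ => c0 * 2 + c0 * 2)).
  { intros i Hi. rewrite expect_plus, !expect_mgf. fold c0.
    pose proof (Hmu lam ltac:(apply Rabs_pos_eq; lra) i Hi).
    pose proof (Hmu (- lam) ltac:(rewrite Rabs_Ropp; apply Rabs_pos_eq; lra) i Hi).
    assert (0 < c0) by apply exp_pos. nra. }
  eapply Rle_trans. apply sumSupp_const. assert (0 < c0) by apply exp_pos.
  rewrite Rabs_pos_eq by lra.
  assert (INR k * (c0 * 2 + c0 * 2) = 4 / (INR k * INR k)).
  { apply (Rmult_eq_reg_r (INR k * INR k * INR k)). rewrite Rmult_assoc, (Rmult_comm (c0 * 2 + c0 * 2)).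
    replace ((INR k * INR k * INR k) * (c0 * 2 + c0 * 2)) with (4 * (c0 * (INR k * INR k * INR k))) by ring.
    rewrite Hc0. field. lra. nra. }
  rewrite H0. assert (/ INR k <= / INR N) by (apply Rinv_le_contravar; lra).
  assert (4 / (INR k * INR k) <= 4 / INR k).
  { unfold Rdiv. apply Rmult_le_compat_l. lra. rewrite Rinv_mult.
    assert (/ INR k <= 1) by (rewrite <- Rinv_1; apply Rinv_le_contravar; lra).
    assert (0 < / INR k) by (apply Rinv_0_lt_compat; lra). nra. }
  unfold Rdiv in *. lra.
Qed.
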